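(* Let $n\ge 6$ and $k$ be integers with $3\le k\le n-3$. Then for every integer $m\ge 2$, \[ \mathsf{BO}(k,\mathbb{Z}/n\mathbb{Z})\ge \frac{1}{m}\left(\frac{(n/k)^{1/m}-k}{k-1}\right)^{m-2}. \]
   Context: For a positive integer $k$, a set $\{g_1,\dots,g_k\}$ of $k$ distinct elements of a finite abelian group $G$ (written additively) is called $k$-barycentric if $\sum_{i=1}^k g_i = k\,g_j$ for some $1\le j\le k$. The $k$-th barycentric Olson constant $\mathsf{BO}(k,G)$ is the smallest integer $\ell$ such that every subset $A\subseteq G$ with $|A|\ge \ell$ contains a $k$-barycentric subset (so that always $\mathsf{BO}(k,G)\le |G|+1$). *)

(* Defs.v *)
From HB Require Import structures.
From mathcomp Require Import all_boot all_order all_algebra.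

Set Implicit Arguments.
Unset Strict Implicit.
Unset Printing Implicit Defensive.

Import GRing.Theory.

Definition k_barycentric (G : finZmodType) (k : nat) (S : {set G}) : bool :=
  (#|S| == k) && [exists j in S, ((\sum_(g in S) g) == j *+ k)%R].

Definition BO_prop (G : finZmodType) (k : nat) : pred nat :=
  fun l => [forall A : {set G}, (l <= #|A|) ==>
             [exists S : {set G}, (S \subset A) && k_barycentric k S]].

Lemma BO_prop_ex (G : finZmodType) (k : nat) : exists l, BO_prop G k l.
Proof.
exists #|G|.+1; apply/forallP => A; apply/implyP => H.
by move: (max_card A); rewrite leqNgt H.
Qed.

Definition BO (k : nat) (G : finZmodType) : nat := ex_minn (BO_prop_ex G k).

(* Main.v *)
Require Import Defs.
From HB Require Import structures.
From mathcomp Require Import all_boot all_order all_algebra.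
From mathcomp Require Import zify.
Set Implicit Arguments. Unset Strict Implicit.
Import GRing.Theory.

Lemma enc_lt B m (f : 'I_m -> nat) : (forall i, f i < B) ->
  \sum_(i < m) f i * B ^ i < B ^ m.
Proof.
elim: m f => [|m IH] f Hf; first by rewrite big_ord0 expn0.
rewrite big_ord_recr /=.
have := @IH (fun i => f (widen_ord (leqnSn m) i)) (fun i => Hf _).
have := Hf ord_max. rewrite expnS /=.
set s := \sum_(i < m) _. move=> h1 h2.
have : f ord_max * B ^ m <= (B - 1) * B ^ m by apply: leq_mul => //; lia.
rewrite mulnBl mul1n. nia.
Qed.

Lemma enc_inj B m (f g : 'I_m -> nat) : (forall i, f i < B) -> (forall i, g i < B) ->
  \sum_(i < m) f i * B ^ i = \sum_(i < m) g i * B ^ i -> forall i, f i = g i.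
Proof.
elim: m f g => [|m IH] f g Hf Hg; first by move=> _ [].
rewrite !big_ord_recr /=.
have Lf := @enc_lt B m (fun i => f (widen_ord (leqnSn m) i)) (fun i => Hf _).
have Lg := @enc_lt B m (fun i => g (widen_ord (leqnSn m) i)) (fun i => Hg _).
move=> E.
have Bp : 0 < B ^ m by move: Lf; case: (B ^ m).
have Etop : f ord_max = g ord_max.
  have := congr1 (fun x => x %/ B ^ m) E => /=.
  by rewrite ![_ + _ * _]addnC !divnMDl // !divn_small // !addn0.
have Elo : \sum_(i < m) f (widen_ord (leqnSn m) i) * B ^ i =
           \sum_(i < m) g (widen_ord (leqnSn m) i) * B ^ i.
  by move: E; rewrite Etop => /addIn.
have IHi := @IH _ _ (fun i => Hf _) (fun i => Hg _) Elo.
move=> i; case: (unliftP ord_max i) => [j ->|->] //.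
have := IHi j. by rewrite (_ : widen_ord _ j = lift ord_max j) //; apply: val_inj; rewrite /= /bump leqNgt ltn_ord.
Qed.


Lemma sqid (a b : nat) : (a - b) ^ 2 + (b - a) ^ 2 + 2 * (a * b) = a ^ 2 + b ^ 2.
Proof. case: (leqP a b) => h; nia. Qed.

Section Key.
Variables (k m B D : nat).
Hypothesis k2 : 2 <= k.
Hypothesis DB : (k - 1) * (D - 1) < B.
Definition V := {ffun 'I_m -> 'I_D}.
Definition enc (v : V) : nat := \sum_(i < m) v i * B ^ i.
Definition sq (v : V) : nat := \sum_(i < m) v i ^ 2.

Lemma key (s : nat) (T : {set V}) (w : V) :
  (forall v, v \in T -> sq v = s) -> #|T| = k -> w \in T ->
  \sum_(v in T) enc v = k * enc w -> False.
Proof.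
move=> Hs cT wT E.
have cT' : #|T :\ w| = k - 1 by rewrite -cT (cardsD1 w T) wT add1n subn1.
have E' : \sum_(v in T :\ w) enc v = (k - 1) * enc w.
  rewrite (big_setD1 w wT) /= in E; by rewrite mulnBl mul1n -E addKn.
have vD : forall (v : V) i, v i <= D - 1.
  move=> v i; have := ltn_ord (v i); lia.
have Dig : forall i, \sum_(v in T :\ w) v i = (k - 1) * w i.
  apply: (@enc_inj B m).
  - move=> i; apply: leq_ltn_trans DB.
    rewrite -cT' -sum_nat_const; apply: leq_sum => v _; exact: vD.
  - move=> i; apply: leq_ltn_trans DB; rewrite leq_mul2l vD orbT //.
  - move: E'; rewrite /enc big_distrr /= exchange_big /=.
    move=> E2.
    rewrite (eq_bigr (fun i => \sum_(v in T :\ w) (v i : nat) * B ^ i)); last first.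
      by move=> i _; rewrite big_distrl.
    rewrite E2; apply: eq_bigr => i _; by rewrite mulnA.
have Q : \sum_(v in T :\ w) \sum_(i < m) ((v i - w i) ^ 2 + (w i - v i) ^ 2) = 0.
  have H1 : \sum_(v in T :\ w) \sum_(i < m) ((v i - w i) ^ 2 + (w i - v i) ^ 2 + 2 * (v i * w i))
          = \sum_(v in T :\ w) (sq v + sq w).
    apply: eq_bigr => v _; rewrite /sq -big_split /=; apply: eq_bigr => i _; exact: sqid.
  have H2 : \sum_(v in T :\ w) (sq v + sq w) = (k - 1) * (2 * s).
    rewrite -cT' -sum_nat_const; apply: eq_bigr => v /setD1P [_ vT].
    by rewrite !Hs // addnn mul2n.
  have H3 : \sum_(v in T :\ w) \sum_(i < m) (2 * (v i * w i)) = (k - 1) * (2 * s).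
    rewrite exchange_big /=.
    transitivity (\sum_(i < m) 2 * (w i * \sum_(v in T :\ w) v i)).
      apply eq_bigr => i _; rewrite big_distrr /= big_distrr /=.
      apply eq_bigr => v _; lia.
    rewrite -(Hs w wT) /sq big_distrr /= big_distrr /=.
    apply: eq_bigr => i _; rewrite Dig; lia.
  rewrite H2 in H1.
  have : \sum_(v in T :\ w) \sum_(i < m) ((v i - w i) ^ 2 + (w i - v i) ^ 2)
     + \sum_(v in T :\ w) \sum_(i < m) (2 * (v i * w i)) = (k - 1) * (2 * s).
    by rewrite -H1 -big_split; apply eq_bigr => v _; rewrite -big_split.
  rewrite H3; lia.
move/eqP: Q; rewrite sum_nat_eq0 => /forallP Q.
have : 0 < #|T :\ w| by rewrite cT'; lia.
case/card_gt0P => v vT'.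
have := Q v; rewrite vT' /= sum_nat_eq0 => /forallP Qv.
have : v = w.
  apply/ffunP => i; apply: val_inj; have := Qv i; rewrite /=.
  rewrite addn_eq0 => /andP [/eqP h1 /eqP h2]; nia.
by move: vT' => /setD1P [/eqP].
Qed.
End Key.


Section Comb.
Variables (p k m B D : nat).
Hypothesis k2 : 2 <= k.
Hypothesis D0 : 0 < D.
Hypothesis DB : (k - 1) * (D - 1) < B.
Hypothesis Bn : k * B ^ m <= p.+2.

Local Notation V := (V m D).
Local Notation enc := (@enc m B D).
Local Notation sq := (@sq m D).

Lemma dig (v : V) i : v i < B.
Proof. have := ltn_ord (v i); nia. Qed.

Lemma enc_ltB (v : V) : enc v < B ^ m.
Proof. exact: enc_lt (fun i => dig v i). Qed.

Lemma enc_injV : injective enc.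
Proof.
move=> v w E; apply/ffunP => i; apply: val_inj.
exact: (@enc_inj B m (fun i => v i) (fun i => w i) (dig v) (dig w) E).
Qed.

Definition phi (v : V) : 'Z_p.+2 := (enc v)%:R%R.

Lemma val_natZ (a : nat) : val ((a%:R)%R : 'Z_p.+2) = a %% p.+2.
Proof. by rewrite Zp_nat. Qed.

Lemma phi_inj : injective phi.
Proof.
move=> v w /(congr1 val); rewrite !val_natZ !modn_small => [/enc_injV //| |];
  have := enc_ltB v; have := enc_ltB w; nia.
Qed.

Definition M := (m * (D - 1) ^ 2).+1.

Lemma sq_lt (v : V) : sq v < M.
Proof.
rewrite /M ltnS -[X in X * _](card_ord m) -sum_nat_const /sq; apply: leq_sum => i _.
have := ltn_ord (v i); rewrite leq_exp2r //; lia.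
Qed.

Definition pv (v : V) : 'I_M := Ordinal (sq_lt v).
Definition P (s : 'I_M) := [set v : V | pv v == s].

Lemma pigeon : exists s, D ^ m <= #|P s| * M.
Proof.
pose s0 := [arg max_(s > (ord0 : 'I_M)) #|P s|].
exists s0.
have -> : D ^ m = \sum_(s : 'I_M) #|P s|.
  rewrite -{1}(card_ord D) -{1}(card_ord m) -card_ffun -sum1_card.
  rewrite (partition_big pv predT) //=; apply: eq_bigr => s _.
  by rewrite -sum1_card; apply: eq_bigl => v; rewrite inE.
rewrite -[X in _ <= _ * X](card_ord M) mulnC -sum_nat_const; apply: leq_sum => s _.
rewrite /s0; case: arg_maxnP => // i _; exact.
Qed.

Lemma comb : exists a, D ^ m <= a * M /\ a < BO k ('Z_p.+2 : finZmodType).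
Proof.
have [s Hs] := pigeon.
exists #|P s|; split => //.
set A := phi @: P s.
have cA : #|A| = #|P s| by rewrite card_imset //; exact: phi_inj.
rewrite -cA /BO; case: ex_minnP => l Hl _.
rewrite ltnNge; apply/negP => lA.
move/forallP/(_ A): Hl; rewrite lA /= => /existsP [S /andP [SA /andP [/eqP cS /existsP [j /andP [jS /eqP Ej]]]]].
set T := [set v in P s | phi v \in S].
have TS : phi @: T = S.
  apply/setP => g; apply/imsetP/idP => [[v] | gS].
    by rewrite inE => /andP [_ ?] ->.
  have := subsetP SA g gS; case/imsetP => v vP Eg; exists v => //.
  by rewrite inE vP -Eg gS.
have phiI : {in T &, injective phi} by move=> x y _ _; exact: phi_inj.
have cT : #|T| = k by rewrite -cS -TS card_in_imset.
have : j \in phi @: T by rewrite TS.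
case/imsetP => w wT Ejw.
have Bm : 0 < B ^ m by have := enc_ltB w; lia.
have encle : forall v, enc v <= B ^ m - 1 by move=> v; have := enc_ltB v; lia.
have sumle : \sum_(v in T) enc v <= k * (B ^ m - 1).
  by rewrite -cT -sum_nat_const; apply: leq_sum => v _.
apply: (@key k m B D k2 DB (val s) T w _ cT wT).
  move=> v; rewrite inE => /andP [vP _]; move: vP; rewrite inE => /eqP Hv.
  by rewrite -Hv.
move: Ej; rewrite -TS big_imset //= /phi -natr_sum Ejw /phi => E.
have E2 : (((enc w)%:R : 'Z_p.+2) *+ k)%R = ((enc w * k)%:R)%R by rewrite natrM mulr_natr.
move: E; rewrite E2.
move/(congr1 val); rewrite !val_natZ !modn_small.
- by move=> ->; rewrite mulnC.
- have := encle w; nia.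
- apply: leq_ltn_trans sumle _; nia.
Qed.
End Comb.

From Stdlib Require Import Reals.
From Stdlib Require Import Lra.
Import ssrnat.

Lemma real_part (n k m B D a : nat) (bo : R) :
  (3 <= INR k)%R -> (INR k <= INR n)%R -> (1 <= m)%N ->
  (INR n < INR k * (INR B + 1) ^ m)%R ->
  (INR B <= (INR k - 1) * INR D)%R -> (1 <= INR D)%R ->
  (INR D ^ (m - 2) <= INR m * INR a)%R -> (INR a <= bo)%R ->
  (/ INR m * ((Rpower (INR n / INR k) (/ INR m) - INR k) / (INR k - 1)) ^ (m - 2) <= bo)%R.
Proof.
move=> k3 kn m1 nB BD D1 Da abo.
have m0 : (0 < INR m)%R by apply: lt_0_INR; apply/ltP.
have k0 : (0 < INR k)%R by lra.
have nk1 : (1 <= INR n / INR k)%R.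
  apply (Rmult_le_reg_r (INR k)) => //; rewrite /Rdiv Rmult_assoc Rinv_l; lra.
set x := Rpower (INR n / INR k) (/ INR m).
have x1 : (1 <= x)%R.
  rewrite /x -(Rpower_O (INR n / INR k)); last lra.
  apply: Rle_Rpower => //; left; apply: Rinv_0_lt_compat => //.
have xm : (x ^ m = INR n / INR k)%R.
  rewrite -Rpower_pow; last lra.
  rewrite /x Rpower_mult Rinv_l ?Rpower_1; lra.
have xB : (x < INR B + 1)%R.
  apply: Rnot_le_lt => H.
  have H2 : ((INR B + 1) ^ m <= x ^ m)%R by apply: pow_incr; split => //; apply: Rplus_le_le_0_compat; [apply: pos_INR| lra].
  rewrite xm in H2.
  have : (INR k * (INR B + 1) ^ m <= INR n)%R.
    apply (Rmult_le_reg_r (/ INR k)); first by apply: Rinv_0_lt_compat.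
    rewrite Rmult_comm -Rmult_assoc Rinv_l; lra.
  lra.
set c := (INR k - 1)%R.
have c0 : (0 < c)%R by rewrite /c; lra.
set y := ((x - INR k) / c)%R.
have yc : (y * c = x - INR k)%R by rewrite /y; field; lra.
have yD : (Rabs y <= INR D)%R.
  apply: Rabs_le; split.
  - apply (Rmult_le_reg_r c) => //; rewrite yc.
    have := Rmult_le_compat_r c 1 (INR D) (Rlt_le _ _ c0) D1. rewrite /c; lra.
  - apply (Rmult_le_reg_r c) => //; rewrite yc.
    move: BD; rewrite -/c => BD. lra.
have := pow_maj_Rabs (INR D) y (m - 2) yD => Hp.
apply: Rle_trans abo.
apply: (Rle_trans _ (/ INR m * (INR m * INR a))).
  apply: Rmult_le_compat_l; first by left; apply: Rinv_0_lt_compat.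
  lra.
rewrite -Rmult_assoc Rinv_l; lra.
Qed.


Lemma existsB (n k m : nat) : (1 <= m)%N -> (k <= n)%N -> (1 <= k)%N ->
  exists B, [/\ (1 <= B)%N, (k * B ^ m <= n)%N & (n < k * B.+1 ^ m)%N].
Proof.
move=> m1 kn k1.
have exP : exists b, (k * b ^ m <= n)%N by exists 1; rewrite exp1n muln1.
have ubP : forall b, (k * b ^ m <= n)%N -> (b <= n)%N.
  move=> b hb; apply: leq_trans hb; case: b => // b.
  apply: (@leq_trans (b.+1 ^ m)); first by rewrite -{1}(expn1 b.+1) leq_pexp2l.
  by rewrite leq_pmull.
case: (ex_maxnP exP ubP) => B hB hmax; exists B; split => //.
- by rewrite lt0n; apply/negP => /eqP B0; move: (hmax 1); rewrite exp1n muln1 kn B0 => /(_ isT).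
- by rewrite ltnNge; apply/negP => /hmax; rewrite ltnn.
Qed.

Lemma natpart (m D a : nat) : (2 <= m)%N -> (0 < D)%N ->
  (D ^ m <= a * (m * (D - 1) ^ 2).+1)%N -> (D ^ (m - 2) <= m * a)%N.
Proof.
move=> m2 D0 H.
have Em : D ^ m = D ^ (m - 2) * D ^ 2 by rewrite -expnD subnK.
set e := D ^ (m - 2) in Em *.
have L : (e * (m * (D - 1) ^ 2).+1 <= m * a * (m * (D - 1) ^ 2).+1)%N.
  apply: (@leq_trans (m * D ^ m)); last by rewrite -mulnA leq_mul2l H orbT.
  rewrite Em mulnA [m * e]mulnC -mulnA leq_mul2l; apply/orP; right.
  have : (1 <= m * (2 * D - 1))%N by nia.
  nia.
by rewrite leq_pmul2r in L.
Qed.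

Lemma expnNat a b : expn a b = Nat.pow a b.
Proof. elim: b => [|b IH] //=; by rewrite expnS IH mulnE. Qed.
Lemma INR_expn a b : INR (expn a b) = (INR a ^ b)%R.
Proof. by rewrite expnNat pow_INR. Qed.
Lemma INR_muln a b : INR (muln a b) = (INR a * INR b)%R.
Proof. by rewrite mulnE mult_INR. Qed.

Theorem mainTheorem10 (n k m : nat) :
  (6 <= n)%N -> (3 <= k)%N -> (k <= n - 3)%N -> (2 <= m)%N ->
  (/ INR m * ((Rpower (INR n / INR k) (/ INR m) - INR k) / (INR k - 1)) ^ (m - 2)
     <= INR (BO k ('Z_n : finZmodType)))%R.
Proof.
case: n => [|[|p]] //= n6 k3 kn m2.
have [B [B1 Bn nB]] := @existsB p.+2 k m ltac:(lia) ltac:(lia) ltac:(lia).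
pose D := ((B - 1) %/ (k - 1)).+1.
have D0 : (0 < D)%N by [].
have DB : ((k - 1) * (D - 1) < B)%N.
  rewrite /D subn1 /=; have := leq_divM (B - 1) (k - 1); lia.
have BD : (B <= (k - 1) * D)%N.
  have := @ltn_ceil (B - 1) (k - 1) ltac:(lia); rewrite /D; lia.
have [a [Ha Hab]] := @comb p k m B D ltac:(lia) D0 DB Bn.
have Hn := @natpart m D a m2 D0 Ha.
apply: (@real_part p.+2 k m B D a).
- have := le_INR 3 k (elimT leP k3); simpl; lra.
- by apply: le_INR; apply/leP; lia.
- lia.
- rewrite -S_INR -INR_expn -INR_muln; apply: lt_INR; exact/ltP.
- rewrite (_ : INR k - 1 = INR (subn k 1))%R; last first.
    by rewrite subnE minus_INR //=; apply/leP; lia.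
  rewrite -INR_muln; apply: le_INR; exact/leP.
- by rewrite (_ : 1 = INR 1)%R //; apply: le_INR; apply/leP.
- rewrite -INR_expn -INR_muln; apply: le_INR; exact/leP.
- apply: le_INR; apply/leP; exact: ltnW.
Qed.
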